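(* Let $k\ge2$ and let $z_{ij}\in\mathbb{C}$ with $|z_{ij}|=1$ for all $1\le i<j\le k$, $z_{ji}=\overline{z_{ij}}$. Then the positive map $\Phi_{2k}^{(\mathbf z)}$ defined below is indecomposable; equivalently there is a state $\rho$ on $\mathbb{C}^{2k}\otimes\mathbb{C}^{2k}$ with positive partial transpose such that $\operatorname{Tr}(W^{(\mathbf z)}\rho)<0$, where $W^{(\mathbf z)}=\frac{1}{2k}\sum_{i,j=1}^{2k}e_{ij}\otimes\Phi^{(\mathbf z)}_{2k}(e_{ij})$.
   Context: $e_{ij}=|e_i\rangle\langle e_j|$ for the standard basis of $\mathbb{C}^{2k}$. Write $X\in M_{2k}(\mathbb{C})$ as a $k\times k$ block matrix $X=(X_{ij})$ with $X_{ij}\in M_2(\mathbb{C})$, and let $R_2(Y)=\mathbb{I}_2\operatorname{Tr}Y-Y$ on $M_2(\mathbb{C})$. $\Phi_{2k}^{(\mathbf z)}(X)$ is the block matrix with diagonal blocks $\frac{1}{2(k-1)}(\operatorname{Tr}X-\operatorname{Tr}X_{ii})\mathbb{I}_2$ and off-diagonal blocks $-\frac{z_{ij}}{2(k-1)}(X_{ij}-R_2(X_{ji}))$, $i\ne j$. A positive map $\Lambda$ is decomposable if $\Lambda=\Lambda_1+\Lambda_2\circ\mathrm T$ with $\Lambda_1,\Lambda_2$ completely positive and $\mathrm T$ the transposition; otherwise indecomposable. A state $\rho$ is PPT if $(\mathrm{id}\otimes\mathrm T)\rho\ge0$. *)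

(* Defs.v *)
From HB Require Import structures.
From mathcomp Require Import all_boot all_order all_algebra.
Set Implicit Arguments. Unset Strict Implicit. Unset Printing Implicit Defensive.
Import Order.TTheory GRing.Theory Num.Theory.
Local Open Scope ring_scope.

Section QDefs.
Variable C : numClosedFieldType.

(* Identification 'I_(m * n) ~ 'I_m * 'I_n (inverse of mxvec_index):
   C^m (x) C^n = C^(m*n), outer index in 'I_m, inner index in 'I_n. *)
Definition unpair (m n : nat) (a : 'I_(m * n)) : 'I_m * 'I_n :=
  enum_val (cast_ord (esym (mxvec_cast m n)) a).

Definition psd (n : nat) (A : 'M[C]_n) : Prop :=
  forall v : 'cV[C]_n, 0 <= ((map_mx (fun x : C => x^*) v)^T *m A *m v) 0 0.

Definition linmap (n : nat) (L : 'M[C]_n -> 'M[C]_n) : Prop :=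
  forall (a : C) (X Y : 'M[C]_n), L (a *: X + Y) = a *: L X + L Y.

Definition positive_map (n : nat) (L : 'M[C]_n -> 'M[C]_n) : Prop :=
  forall X : 'M[C]_n, psd X -> psd (L X).

(* (id_m (x) L) acting on M_m (x) M_n = M_(m*n), blockwise *)
Definition ampl (m n : nat) (L : 'M[C]_n -> 'M[C]_n) (X : 'M[C]_(m * n))
  : 'M[C]_(m * n) :=
  \matrix_(a, b)
    L (\matrix_(s, t) X (mxvec_index (unpair a).1 s) (mxvec_index (unpair b).1 t))
      (unpair a).2 (unpair b).2.

Definition CP (n : nat) (L : 'M[C]_n -> 'M[C]_n) : Prop :=
  linmap L /\ forall (m : nat) (X : 'M[C]_(m * n)), psd X -> psd (@ampl m n L X).

Definition decomposable (n : nat) (L : 'M[C]_n -> 'M[C]_n) : Prop :=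
  exists L1 L2 : 'M[C]_n -> 'M[C]_n,
    [/\ CP L1, CP L2 & forall X, L X = L1 X + L2 (X^T)].

Definition blk (k : nat) (X : 'M[C]_(k * 2)) (p q : 'I_k) : 'M[C]_2 :=
  \matrix_(s, t) X (mxvec_index p s) (mxvec_index q t).

Definition R2 (Y : 'M[C]_2) : 'M[C]_2 := (\tr Y)%:M - Y.

Definition Phi (k : nat) (z : 'I_k -> 'I_k -> C) (X : 'M[C]_(k * 2))
  : 'M[C]_(k * 2) :=
  \matrix_(a, b)
    let p := (unpair a).1 in let s := (unpair a).2 in
    let q := (unpair b).1 in let t := (unpair b).2 in
    if p == q then
      (2 * (k.-1)%:R)^-1 * (\tr X - \tr (blk X p p)) * (s == t)%:R
    else
      - (z p q / (2 * (k.-1)%:R)) * (blk X p q s t - R2 (blk X q p) s t).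

End QDefs.

(* Main.v *)
Require Import Defs.
From HB Require Import structures.
From mathcomp Require Import all_boot all_order all_algebra.
From Stdlib Require Import Ring.
Set Implicit Arguments. Unset Strict Implicit. Unset Printing Implicit Defensive.
Import Order.TTheory GRing.Theory Num.Theory.
Local Open Scope ring_scope.

Section Work.
Variable C : numClosedFieldType.
Notation Ct := (GRing.PzSemiRing.sort (Num_ClosedField__to__GRing_PzSemiRing C)).
Notation cadd := (@Algebra.add (Num_ClosedField__to__Algebra_BaseAddMagma C)).
Notation cmul := (@GRing.mul (Num_ClosedField__to__GRing_PzSemiRing C)).
Notation copp := (@Algebra.opp (Num_ClosedField__to__Algebra_BaseZmodule C)).
Notation czero := (@Algebra.zero (GRing_PzSemiRing__to__Algebra_BaseAddUMagma (Num_ClosedField__to__GRing_PzSemiRing C))).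
Notation cone := (GRing.one (Num_ClosedField__to__GRing_PzSemiRing C)).
Lemma RT : @ring_theory Ct czero cone cadd cmul (fun x y : C => x - y) copp (@eq Ct).
Proof. split=> //=; [exact: add0r|exact: addrC|exact: addrA|exact: mul1r|exact: mulrC|exact: mulrA|exact: mulrDl|exact: subrr]. Qed.
Add Ring Cring : RT.
Lemma addE' : @Algebra.add (GRing_PzSemiRing__to__Algebra_BaseAddMagma (Num_ClosedField__to__GRing_PzSemiRing C)) = cadd. Proof. by []. Qed.
Lemma zeroE : @Algebra.zero (Algebra_Nmodule__to__Algebra_BaseAddUMagma (Num_ClosedField__to__Algebra_Nmodule C)) = czero. Proof. by []. Qed.
Lemma oppE : @Algebra.opp (GRing_PzRing__to__Algebra_BaseZmodule (Num_ClosedField__to__GRing_PzRing C)) = copp. Proof. by []. Qed.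
Lemma mulE : @GRing.mul (GRing_PzRing__to__GRing_PzSemiRing (Num_ClosedField__to__GRing_PzRing C)) = cmul. Proof. by []. Qed.
Lemma oneE : GRing.one (join_GRing_PzRing_between_Algebra_BaseZmodule_and_GRing_PzSemiRing (Num_ClosedField__to__GRing_PzRing C)) = cone. Proof. by []. Qed.
Lemma myE (x y : C) : cmul x cone = cmul y cone -> x = y. Proof. by rewrite !mulr1. Qed.
Ltac cring := apply: myE; rewrite ?addE' ?zeroE ?oppE ?mulE ?oneE; ring.
Ltac cringH H := apply: myE; rewrite ?addE' ?zeroE ?oppE ?mulE ?oneE; ring [H].

Lemma unpair_mi m n (i : 'I_m) (j : 'I_n) : unpair (mxvec_index i j) = (i, j).
Proof. by rewrite /unpair /mxvec_index cast_ordK enum_rankK. Qed.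
Lemma mi_unpair m n (a : 'I_(m * n)) : mxvec_index (unpair a).1 (unpair a).2 = a.
Proof. by rewrite /unpair /mxvec_index -surjective_pairing enum_valK cast_ordKV. Qed.
Lemma mi_eq m n (i i' : 'I_m) (j j' : 'I_n) :
  (mxvec_index i j == mxvec_index i' j') = (i == i') && (j == j').
Proof.
apply/eqP/andP => [h|[/eqP-> /eqP->]] //.
by have := congr1 (@unpair m n) h; rewrite !unpair_mi => -[-> ->].
Qed.
Lemma sum_mi m n (F : 'I_(m * n) -> C) :
  \sum_a F a = \sum_(i < m) \sum_(j < n) F (mxvec_index i j).
Proof.
rewrite pair_big /= (reindex (fun x : 'I_m * 'I_n => mxvec_index x.1 x.2)) //=.
by exists (@unpair m n) => [[i j]|a] _; rewrite ?unpair_mi ?mi_unpair.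
Qed.
Lemma sum2 (F : 'I_2 -> C) : \sum_(i < 2) F i = F ord0 + F ord_max.
Proof. by rewrite big_ord_recl big_ord1; congr (_ + F _); apply: val_inj. Qed.
Lemma sum_delta n (F : 'I_n -> C) (i : 'I_n) :
  \sum_j (i == j)%:R * F j = F i.
Proof.
rewrite (bigD1 i) //= eqxx mul1r big1 ?addr0 // => j /negPf; rewrite eq_sym => ->.
by rewrite mul0r.
Qed.
Lemma sum_delta' n (F : 'I_n -> C) (i : 'I_n) :
  \sum_j F j * (j == i)%:R = F i.
Proof. by rewrite -[RHS](sum_delta F i); apply: eq_bigr => j _; rewrite mulrC eq_sym. Qed.
Lemma sum_two n (p q : 'I_n) (F : 'I_n -> C) : p != q ->
  (forall r, r != p -> r != q -> F r = 0) -> \sum_r F r = F p + F q.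
Proof.
move=> pq h; rewrite (bigD1 p) //= (bigD1 q) /=; last by rewrite eq_sym.
rewrite big1 ?addr0 // => r /andP[rp rq]; exact: h.
Qed.

Definition qf n (A : 'M[C]_n) (v : 'cV[C]_n) := \sum_a \sum_b (v a 0)^* * A a b * v b 0.
Lemma qfE n (A : 'M[C]_n) v : ((map_mx (fun x => x^*) v)^T *m A *m v) 0 0 = qf A v.
Proof.
rewrite /qf mxE exchange_big; apply: eq_bigr => b _; rewrite mxE mulr_suml.
by apply: eq_bigr => a _; rewrite !mxE.
Qed.

Definition R2' (M : 'I_2 -> 'I_2 -> C) (s t : 'I_2) :=
  (M ord0 ord0 + M ord_max ord_max) *+ (s == t) - M s t.
Definition Nrm (u : 'I_2 -> C) := (u ord0)^* * u ord0 + (u ord_max)^* * u ord_max.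
Definition Tf (u v : 'I_2 -> C) (B B' : 'I_2 -> 'I_2 -> C) :=
  \sum_s \sum_t (u s)^* * (B s t - R2' B' s t) * v t.
Definition Qb (A B B' D : 'I_2 -> 'I_2 -> C) (al be : 'I_2 -> C) :=
  \sum_s \sum_t ((al s)^* * A s t * al t + (al s)^* * B s t * be t
                 + (be s)^* * B' s t * al t + (be s)^* * D s t * be t).

Lemma cm_ge0 (x : C) : 0 <= x^* * x.
Proof. by rewrite mulrC mul_conjC_ge0. Qed.
Lemma cm_eq0 (x : C) : (x^* * x == 0) = (x == 0).
Proof. by rewrite mulrC mul_conjC_eq0. Qed.
Lemma Nrm_ge0 u : 0 <= Nrm u.
Proof. by rewrite /Nrm addr_ge0 // cm_ge0. Qed.

Lemma Nrm_eq0 u : Nrm u = 0 -> u ord0 = 0 /\ u ord_max = 0.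
Proof.
rewrite /Nrm => /eqP; rewrite paddr_eq0 ?cm_ge0 //.
by rewrite !cm_eq0 => /andP[/eqP-> /eqP->].
Qed.

Lemma ord2_neq : (ord0 == ord_max :> 'I_2) = false. Proof. by []. Qed.

Lemma core4 (A B B' D : 'I_2 -> 'I_2 -> C) (u v : 'I_2 -> C) (z : C) :
  z * z^* = 1 ->
  (forall al be, 0 <= Qb A B B' D al be) ->
  0 <= Nrm u * (D ord0 ord0 + D ord_max ord_max) + Nrm v * (A ord0 ord0 + A ord_max ord_max)
      - z * Tf u v B B' - z^* * Tf v u B' B.
Proof.
move=> hz H.
have hA : 0 <= A ord0 ord0 + A ord_max ord_max.
  have h0 := H (fun s => if s == ord0 then 1 else 0) (fun _ => 0).
  have h1 := H (fun s => if s == ord0 then 0 else 1) (fun _ => 0).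
  rewrite /Qb !sum2 /= ?ord2_neq ?eqxx /= in h0 h1.
  rewrite ?conjC0 ?conjC1 ?mul0r ?mulr0 ?mul1r ?mulr1 ?addr0 ?add0r in h0 h1.
  exact: addr_ge0.
have hD : 0 <= D ord0 ord0 + D ord_max ord_max.
  have h0 := H (fun _ => 0) (fun s => if s == ord0 then 1 else 0).
  have h1 := H (fun _ => 0) (fun s => if s == ord0 then 0 else 1).
  rewrite /Qb !sum2 /= ?ord2_neq ?eqxx /= in h0 h1.
  rewrite ?conjC0 ?conjC1 ?mul0r ?mulr0 ?mul1r ?mulr1 ?addr0 ?add0r in h0 h1.
  exact: addr_ge0.
have [Nu0|Nu0] := eqVneq (Nrm u) 0.
  have [u0 u1] := Nrm_eq0 Nu0.
  rewrite Nu0 mul0r add0r /Tf /R2' !sum2 /= ?ord2_neq ?eqxx /= u0 u1 ?conjC0.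
  rewrite ?mul0r ?mulr0 ?add0r ?addr0 ?subr0 ?mulr0n ?mulr1n.
  rewrite ?(mul0r, mulr0, add0r, addr0, subr0, sub0r, mulr0n, mulr1n).
  by apply: mulr_ge0; first exact: Nrm_ge0.
have [Nv0|Nv0] := eqVneq (Nrm v) 0.
  have [v0 v1] := Nrm_eq0 Nv0.
  rewrite Nv0 mul0r addr0 /Tf /R2' !sum2 /= ?ord2_neq ?eqxx /= v0 v1 ?conjC0.
  rewrite ?(mul0r, mulr0, add0r, addr0, subr0, sub0r, mulr0n, mulr1n).
  by apply: mulr_ge0; first exact: Nrm_ge0.
have pu : 0 < Nrm u by rewrite lt_def Nu0 Nrm_ge0.
have pv : 0 < Nrm v by rewrite lt_def Nv0 Nrm_ge0.
set ut := fun s : 'I_2 => if s == ord0 then (u ord_max)^* else - (u ord0)^*.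
set vt := fun s : 'I_2 => if s == ord0 then (v ord_max)^* else - (v ord0)^*.
have h1 := H (fun s => Nrm v * u s) (fun s => - (z * Nrm u * v s)).
have h2 := H (fun s => Nrm v * ut s) (fun s => z^* * Nrm u * vt s).
rewrite -(pmulr_rge0 _ (mulr_gt0 pu pv)).
suff -> : Nrm u * Nrm v * (Nrm u * (D ord0 ord0 + D ord_max ord_max) + Nrm v * (A ord0 ord0 + A ord_max ord_max)
      - z * Tf u v B B' - z^* * Tf v u B' B) = Qb A B B' D (fun s => Nrm v * u s) (fun s => - (z * Nrm u * v s))
        + Qb A B B' D (fun s => Nrm v * ut s) (fun s => z^* * Nrm u * vt s) by exact: addr_ge0.
rewrite /Qb /Tf /R2' /Nrm /ut /vt !sum2 /= ?ord2_neq ?eqxx /= ?mulr0n ?mulr1n.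
rewrite !(rmorphD, rmorphM, rmorphN, rmorphB) /= !conjCK.
cringH hz.
Qed.


Section Part1.
Variable k : nat.
Local Notation mi := (@mxvec_index k 2).
Local Notation tr4 X q := (X (mi q ord0) (mi q ord0) + X (mi q ord_max) (mi q ord_max)).
Local Notation X4 X p q := (fun s t : 'I_2 => X (mi p s) (mi q t)).
Local Notation W w p := (fun s : 'I_2 => w (mi p s) 0).

Lemma trX_sum (X : 'M[C]_(k * 2)) : \tr X = \sum_q tr4 X q.
Proof. by rewrite /mxtrace sum_mi; apply: eq_bigr => q _; rewrite sum2. Qed.

Lemma qPhi (z : 'I_k -> 'I_k -> C) (X : 'M[C]_(k * 2)) (w : 'cV[C]_(k * 2)) :
  qf (Phi z X) w = (2 * (k.-1)%:R)^-1 * \sum_p \sum_(q | q != p)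
    (Nrm (W w p) * tr4 X q - z p q * Tf (W w p) (W w q) (X4 X p q) (X4 X q p)).
Proof.
rewrite /qf sum_mi mulr_sumr; apply: eq_bigr => p _.
under eq_bigr do rewrite sum_mi.
rewrite exchange_big (bigD1 p) //=.
set c := (2 * (k.-1)%:R)^-1.
have Hpp : \sum_j \sum_j0 (w (mi p j) 0)^* * Phi z X (mi p j) (mi p j0) * w (mi p j0) 0
   = \sum_(q | q != p) c * (Nrm (W w p) * tr4 X q).
  rewrite -mulr_sumr.
  have -> : \sum_(q | q != p) Nrm (W w p) * tr4 X q = Nrm (W w p) * (\tr X - \tr (blk X p p)).
    rewrite -mulr_sumr trX_sum [in RHS](bigD1 p) //= /mxtrace sum2 !mxE.
    by rewrite addrAC subrr add0r.
  transitivity (\sum_j (w (mi p j) 0)^* * (c * (\tr X - \tr (blk X p p))) * w (mi p j) 0).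
    apply: eq_bigr => s _.
    rewrite -[RHS](sum_delta (fun t => (w (mi p s) 0)^* * (c * (\tr X - \tr (blk X p p))) * w (mi p t) 0) s).
    apply: eq_bigr => t _; rewrite mxE !unpair_mi /= eqxx.
    by rewrite /c; set e := ((s == t)%:R); set i := (_^-1); cring.
  rewrite sum2 /Nrm; cring.
rewrite Hpp mulr_sumr -big_split /=; apply: eq_bigr => q qp.
rewrite /Tf /R2' !sum2 /=.
rewrite !mxE !unpair_mi /= eq_sym (negbTE qp) !mxE /mxtrace !sum2 !mxE /=.
rewrite ?(mulr0n, mulr1n, subr0, sub0r).
rewrite /Nrm /c; cring.
Qed.

Lemma qf_col m n (A : 'M[C]_(m * n)) (f : 'I_m -> 'I_n -> C) :
  qf A (\col_a f (unpair a).1 (unpair a).2) =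
  \sum_i \sum_j (f i j)^* * (\sum_i' \sum_j' A (mxvec_index i j) (mxvec_index i' j') * f i' j').
Proof.
rewrite /qf sum_mi; apply: eq_bigr => i _; apply: eq_bigr => j _.
rewrite sum_mi mulr_sumr; apply: eq_bigr => i' _; rewrite mulr_sumr; apply: eq_bigr => j' _.
by rewrite !mxE !unpair_mi /= mulrA.
Qed.

Lemma blk_psd (X : 'M[C]_(k * 2)) p q : p != q -> psd X ->
  forall al be, 0 <= Qb (X4 X p p) (X4 X p q) (X4 X q p) (X4 X q q) al be.
Proof.
move=> pq hX al be.
pose vf := fun (r : 'I_k) (j : 'I_2) => if r == p then al j else if r == q then be j else 0.
have sv : forall G : 'I_k -> 'I_2 -> C -> C, (forall r j, G r j 0 = 0) ->
    \sum_r \sum_j G r j (vf r j) = \sum_j G p j (al j) + \sum_j G q j (be j).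
  move=> G G0; rewrite (sum_two pq); last first.
    by move=> r rp rq; apply: big1 => j _; rewrite /vf (negbTE rp) (negbTE rq) G0.
  by rewrite /vf eqxx eq_sym (negbTE pq) eqxx.
have := hX (\col_a vf (unpair a).1 (unpair a).2).
rewrite qfE qf_col.
rewrite (sv (fun i j x => x^* * (\sum_i' \sum_j' X (mi i j) (mi i' j') * vf i' j'))); last first.
  by move=> r j; rewrite conjC0 mul0r.
have sv2 : forall i j, \sum_i' \sum_j' X (mi i j) (mi i' j') * vf i' j' =
    \sum_j' X (mi i j) (mi p j') * al j' + \sum_j' X (mi i j) (mi q j') * be j'.
  by move=> i j; rewrite (sv (fun i' j' x => X (mi i j) (mi i' j') * x)) // => *; rewrite mulr0.
under eq_bigr do rewrite sv2.
under [X in _ + X]eq_bigr do rewrite sv2.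
rewrite /Qb !sum2 /=.
set e1 := (X in 0 <= X) => h; set e2 := (X in 0 <= X); suff -> : e2 = e1 by [].
rewrite /e1 /e2; cring.
Qed.

Lemma Phi_pos (z : 'I_k -> 'I_k -> C)
  (hz : forall p q : 'I_k, p != q -> z p q * (z p q)^* = 1 /\ z q p = (z p q)^*)
  (X : 'M[C]_(k * 2)) : psd X -> psd (Phi z X).
Proof.
move=> hX w; rewrite qfE qPhi.
apply: mulr_ge0; first by rewrite invr_ge0 mulr_ge0 ?ler0n.
set G := fun p q => Nrm (W w p) * tr4 X q - z p q * Tf (W w p) (W w q) (X4 X p q) (X4 X q p).
have sym : forall F : 'I_k -> 'I_k -> C,
    \sum_p \sum_(q | q != p) F q p = \sum_p \sum_(q | q != p) F p q.
  move=> F; rewrite [LHS](eq_bigr (fun p => \sum_q (if q != p then F q p else 0))); last first.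
    by move=> p _; rewrite big_mkcond.
  rewrite exchange_big; apply: eq_bigr => p _; rewrite [RHS]big_mkcond; apply: eq_bigr => q _.
  by rewrite eq_sym.
rewrite -(pmulrn_lge0 _ (isT : (0 < 2)%N)) mulr2n.
rewrite -[X in _ + X](sym G) -big_split /=.
apply: sumr_ge0 => p _; rewrite -big_split /=; apply: sumr_ge0 => q qp.
have pq : p != q by rewrite eq_sym.
have [h1 h2] := hz p q pq.
have := core4 (W w p) (W w q) h1 (blk_psd pq hX).
rewrite /G h2 /=.
set e1 := (X in 0 <= X) => h; set e2 := (X in 0 <= X); suff -> : e2 = e1 by [].
rewrite /e1 /e2; cring.
Qed.

End Part1.


Lemma collapse n (io : 'I_4 -> 'I_n) (H : 'I_n -> C) (f : 'I_4 -> C) :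
  \sum_y H y * (\sum_a (y == io a)%:R * f a) = \sum_a H (io a) * f a.
Proof.
under eq_bigr do rewrite mulr_sumr.
rewrite exchange_big; apply: eq_bigr => a _.
rewrite -(sum_delta' (fun y => H y * f a) (io a)); apply: eq_bigr => y _.
set e := (_ == _)%:R; cring.
Qed.

Lemma collapse' n (io : 'I_4 -> 'I_n) (K : 'I_n -> C) (f : 'I_4 -> C) :
  \sum_y (\sum_a (y == io a)%:R * f a)^* * K y = \sum_a (f a)^* * K (io a).
Proof.
under eq_bigr do rewrite rmorph_sum mulr_suml.
rewrite exchange_big; apply: eq_bigr => a _.
rewrite -(sum_delta' (fun y => (f a)^* * K y) (io a)); apply: eq_bigr => y _.
rewrite rmorphM /= rmorph_nat.
set e := (_ == _)%:R; cring.
Qed.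

Notation o0 := (@Ordinal 4 0 isT).
Notation o1 := (@Ordinal 4 1 isT).
Notation o2 := (@Ordinal 4 2 isT).
Notation o3 := (@Ordinal 4 3 isT).
Lemma ord4_ind (P : 'I_4 -> Prop) :
  P (@Ordinal 4 0 isT) -> P (@Ordinal 4 1 isT) -> P (@Ordinal 4 2 isT) -> P (@Ordinal 4 3 isT) ->
  forall a, P a.
Proof.
move=> h0 h1 h2 h3 [[|[|[|[|n]]]] H].
- by rewrite (bool_irrelevance H isT).
- by rewrite (bool_irrelevance H isT).
- by rewrite (bool_irrelevance H isT).
- by rewrite (bool_irrelevance H isT).
- by [].
Qed.

Section Part2.
Variable k : nat.
Hypothesis hk : (2 <= k)%N.
Local Notation mi := (@mxvec_index k 2).
Definition p0 : 'I_k := Ordinal (ltnW hk).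
Definition p1 : 'I_k := Ordinal hk.
Definition bk (a : 'I_4) : 'I_k := if (a < 2)%N then p0 else p1.
Definition sk (a : 'I_4) : 'I_2 := if odd a then ord_max else ord0.
Definition io (a : 'I_4) : 'I_(k * 2) := mxvec_index (bk a) (sk a).

Variable z : 'I_k -> 'I_k -> C.
Hypothesis hzz : z p0 p1 * (z p0 p1)^* = 1.
Hypothesis hz10 : z p1 p0 = (z p0 p1)^*.
Local Notation zc := (z p0 p1).


Ltac csimp := rewrite ?(conjC0, conjC1, conjCK, rmorphN, rmorph1, mul0r, mulr0, mul1r, mulr1, add0r, addr0, mulrS, mulr0n) /=.



Definition cL (L : 'M[C]_(k * 2) -> 'M[C]_(k * 2)) (a1 b1 a2 b2 : 'I_4) :=
  L (delta_mx (io a1) (io b1)) (io a2) (io b2).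
Definition Inr (c : 'I_4 -> 'I_4 -> 'I_4 -> 'I_4 -> C) (f : 'I_4 -> 'I_4 -> C) a1 a2 :=
  \sum_b1 \sum_b2 c a1 b1 a2 b2 * f b1 b2.
Definition Qg c f := \sum_a1 \sum_a2 (f a1 a2)^* * Inr c f a1 a2.

Lemma CPquad (L : 'M[C]_(k * 2) -> 'M[C]_(k * 2)) :
  (forall m (X : 'M[C]_(m * (k * 2))), psd X -> psd (ampl L X)) ->
  forall f, 0 <= Qg (cL L) f.
Proof.
move=> hL f.
pose g (x : 'I_(4 * (k * 2))) : C := ((unpair x).2 == io (unpair x).1)%:R.
pose Om := \matrix_(x, y) (g x * g y) : 'M[C]_(4 * (k * 2)).
have psdOm : psd Om.
  move=> v; rewrite qfE /qf.
  suff -> : \sum_a \sum_b (v a 0)^* * Om a b * v b 0 =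
      (\sum_a g a * v a 0)^* * (\sum_b g b * v b 0) by exact: cm_ge0.
  rewrite rmorph_sum mulr_suml; apply: eq_bigr => a _; rewrite mulr_sumr.
  apply: eq_bigr => b _; rewrite mxE rmorphM /= /g rmorph_nat.
  set e1 := (_ == _)%:R; set e2 := (_ == _)%:R; cring.
have blk : forall a1 b1, (\matrix_(s, t) Om (mxvec_index a1 s) (mxvec_index b1 t))
    = delta_mx (io a1) (io b1).
  move=> a1 b1; apply/matrixP => s t; rewrite !mxE /g !unpair_mi /=.
  by case: (s == io a1); case: (t == io b1); rewrite ?mul1r ?mul0r.
pose vf (a1 : 'I_4) (y : 'I_(k * 2)) := \sum_a2 (y == io a2)%:R * f a1 a2.
have := hL 4%N Om psdOm (\col_x vf (unpair x).1 (unpair x).2).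
rewrite qfE qf_col /Qg.
suff -> : \sum_i \sum_j (vf i j)^* *
    (\sum_i' \sum_j' ampl L Om (mxvec_index i j) (mxvec_index i' j') * vf i' j') =
    \sum_a1 \sum_a2 (f a1 a2)^* * Inr (cL L) f a1 a2 by [].
apply: eq_bigr => a1 _.
under eq_bigr => y _.
  under eq_bigr => b1 _.
    under eq_bigr => y' _ do rewrite /ampl mxE !unpair_mi /= blk.
    rewrite collapse.
  over.
over.
rewrite /vf collapse'; apply: eq_bigr => a2 _; congr (_ * _).
Qed.


Lemma sum4 (F : 'I_4 -> C) : \sum_(a < 4) F a = F o0 + F o1 + F o2 + F o3.
Proof.
rewrite !big_ord_recl big_ord0 addr0 !addrA.
by congr (F _ + F _ + F _ + F _); apply: val_inj.
Qed.

Definition vecl (l : seq ('I_4 * 'I_4 * C)) : 'I_4 -> 'I_4 -> C :=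
  fun a1 a2 => \sum_(x <- l) ((x.1.1 == a1) && (x.1.2 == a2))%:R * x.2.

Lemma natr_and (a b : bool) : ((a && b)%:R : C) = a%:R * b%:R.
Proof. by case: a; case: b; rewrite ?mul1r ?mul0r. Qed.

Lemma dcollapse (p : 'I_4 * 'I_4) (G : 'I_4 -> 'I_4 -> C) :
  \sum_b1 \sum_b2 ((p.1 == b1) && (p.2 == b2))%:R * G b1 b2 = G p.1 p.2.
Proof.
rewrite -(sum_delta (fun b1 => G b1 p.2) p.1); apply: eq_bigr => b1 _.
rewrite -(sum_delta (fun b2 => G b1 b2) p.2) mulr_sumr; apply: eq_bigr => b2 _.
by rewrite natr_and mulrA.
Qed.

Lemma Qg_vecl c l : Qg c (vecl l) =
  \sum_(x <- l) \sum_(y <- l) (x.2)^* * y.2 * c x.1.1 y.1.1 x.1.2 y.1.2.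
Proof.
have inner : forall a1 a2, Inr c (vecl l) a1 a2 = \sum_(y <- l) y.2 * c a1 y.1.1 a2 y.1.2.
  move=> a1 a2; rewrite /Inr /vecl.
  transitivity (\sum_b1 \sum_b2 \sum_(y <- l)
      ((y.1.1 == b1) && (y.1.2 == b2))%:R * (y.2 * c a1 b1 a2 b2)).
    apply: eq_bigr => b1 _; apply: eq_bigr => b2 _; rewrite mulr_sumr; apply: eq_bigr => y _.
    set e := _%:R; cring.
  under eq_bigr do rewrite exchange_big.
  rewrite exchange_big; apply: eq_bigr => y _.
  exact: (dcollapse y.1 (fun b1 b2 => y.2 * c a1 b1 a2 b2)).
rewrite /Qg.
under eq_bigr do under eq_bigr do rewrite inner.
transitivity (\sum_a1 \sum_a2 \sum_(x <- l) ((x.1.1 == a1) && (x.1.2 == a2))%:R *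
    ((x.2)^* * \sum_(y <- l) y.2 * c a1 y.1.1 a2 y.1.2)).
  apply: eq_bigr => a1 _; apply: eq_bigr => a2 _.
  rewrite /vecl rmorph_sum mulr_suml; apply: eq_bigr => x _.
  rewrite rmorphM /= rmorph_nat; set e := _%:R; set S := \sum_(y <- l) _; cring.
under eq_bigr do rewrite exchange_big.
rewrite exchange_big; apply: eq_bigr => x _.
rewrite (dcollapse x.1 (fun a1 a2 => (x.2)^* * \sum_(y <- l) y.2 * c a1 y.1.1 a2 y.1.2)) /= mulr_sumr.
apply: eq_bigr => y _; cring.
Qed.

Definition vphi := vecl [:: (o0, o0, 1); (o1, o1, 1); (o2, o2, zc^*); (o3, o3, zc^*)].
Definition ev i j := vecl [:: (i, j, 1)].
Definition tw i j (x : C) i' j' (y : C) := vecl [:: (i, j, x); (i', j', y)].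
Definition vqt := vecl [:: (o0, o1, 1); (o1, o0, -1); (o3, o2, zc^*); (o2, o3, - zc^*)].

Definition Fs : seq (nat * ('I_4 -> 'I_4 -> C)) :=
  [:: (1, vphi); (3, ev o0 o0); (3, ev o0 o1); (3, ev o1 o0); (3, ev o1 o1);
      (3, ev o2 o2); (3, ev o2 o3); (3, ev o3 o2); (3, ev o3 o3);
      (1, tw o0 o2 1 o3 o1 zc); (1, tw o1 o3 1 o2 o0 zc); (1, tw o0 o3 1 o2 o1 (- zc));
      (1, tw o1 o2 1 o3 o0 (- zc))]%N.
Definition Gs : seq (nat * ('I_4 -> 'I_4 -> C)) :=
  [:: (1, tw o0 o2 1 o2 o0 zc); (1, tw o0 o3 1 o3 o0 zc); (1, tw o1 o2 1 o2 o1 zc);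
      (1, tw o1 o3 1 o3 o1 zc);
      (4, ev o0 o0); (4, ev o1 o1); (4, ev o2 o2); (4, ev o3 o3);
      (2, tw o0 o1 1 o1 o0 1); (2, tw o2 o3 1 o3 o2 1); (1, vqt)]%N.


Definition cP (a1 b1 a2 b2 : 'I_4) := Phi z (delta_mx (io a1) (io b1)) (io a2) (io b2).
Arguments cP : simpl never.
Arguments cL : simpl never.
Arguments io : simpl never.

Lemma combine (L1 L2 : 'M[C]_(k * 2) -> 'M[C]_(k * 2)) :
  (forall X, Phi z X = L1 X + L2 X^T) ->
  \sum_(x <- Fs) x.1%:R * Qg (cL L1) x.2 + \sum_(x <- Gs) x.1%:R * Qg (cL L2) x.2 =
  \sum_(x <- Fs) x.1%:R * Qg cP x.2.
Proof.
move=> hdec.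
have cPE : forall a1 b1 a2 b2, cP a1 b1 a2 b2 = cL L1 a1 b1 a2 b2 + cL L2 b1 a1 a2 b2.
  by move=> a1 b1 a2 b2; rewrite /cP hdec mxE trmx_delta.
rewrite /Fs /Gs !big_cons !big_nil /= /vphi /ev /tw /vqt !Qg_vecl.
rewrite unlock /=.
rewrite ?conjC1 ?rmorphN /= ?conjCK ?mulrS ?mulr0n ?conjC1 /=.
rewrite !cPE.
cringH hzz.
Qed.

Lemma tr_delta n (i j : 'I_n) : \tr (delta_mx i j : 'M[C]_n) = (i == j)%:R.
Proof.
rewrite /mxtrace (bigD1 i) //= big1 => [|x xi]; rewrite !mxE ?eqxx.
  by rewrite addr0.
by rewrite (negbTE xi).
Qed.

Lemma bk0 : bk o0 = p0. Proof. by []. Qed.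
Lemma bk1 : bk o1 = p0. Proof. by []. Qed.
Lemma bk2 : bk o2 = p1. Proof. by []. Qed.
Lemma bk3 : bk o3 = p1. Proof. by []. Qed.
Lemma sk0 : sk o0 = ord0. Proof. by []. Qed.
Lemma sk1 : sk o1 = ord_max. Proof. by []. Qed.
Lemma sk2 : sk o2 = ord0. Proof. by []. Qed.
Lemma sk3 : sk o3 = ord_max. Proof. by []. Qed.
Lemma p0p1 : (p0 == p1) = false. Proof. by []. Qed.
Lemma p1p0 : (p1 == p0) = false. Proof. by []. Qed.
Lemma ord2_neq' : (ord_max == ord0 :> 'I_2) = false. Proof. by []. Qed.

Definition cPf (a1 b1 a2 b2 : 'I_4) : C :=
 if bk a2 == bk b2 then
   (2 * (k.-1)%:R)^-1 * (((bk a1 == bk b1) && (sk a1 == sk b1))%:R -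
    ([&& (bk a2 == bk a1) && (ord0 == sk a1), bk a2 == bk b1 & ord0 == sk b1]%:R +
     [&& (bk a2 == bk a1) && (ord_max == sk a1), bk a2 == bk b1 & ord_max == sk b1]%:R)) *
   (sk a2 == sk b2)%:R
 else
   - (z (bk a2) (bk b2) * (2 * (k.-1)%:R)^-1) *
   ([&& (bk a2 == bk a1) && (sk a2 == sk a1), bk b2 == bk b1 & sk b2 == sk b1]%:R -
    (([&& (bk b2 == bk a1) && (ord0 == sk a1), bk a2 == bk b1 & ord0 == sk b1]%:R +
      [&& (bk b2 == bk a1) && (ord_max == sk a1), bk a2 == bk b1 & ord_max == sk b1]%:R)
       *+ (sk a2 == sk b2) -
     [&& (bk b2 == bk a1) && (sk a2 == sk a1), bk a2 == bk b1 & sk b2 == sk b1]%:R)).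

Lemma cP_eq a1 b1 a2 b2 : cP a1 b1 a2 b2 = cPf a1 b1 a2 b2.
Proof.
rewrite /cP /Phi mxE /io !unpair_mi /=.
rewrite !tr_delta /mxtrace !sum2 !mxE !mi_eq.
rewrite /mxtrace !sum2 !mxE !mi_eq.
by [].
Qed.

Lemma value : \sum_(x <- Fs) x.1%:R * Qg cP x.2 = - (8%:R * (2 * (k.-1)%:R)^-1).
Proof.
rewrite /Fs !big_cons !big_nil /= /vphi /ev /tw /vqt !Qg_vecl.
rewrite unlock /=.
rewrite !cP_eq /cPf.
rewrite ?(bk0, bk1, bk2, bk3, sk0, sk1, sk2, sk3) /= ?(eqxx, p0p1, p1p0, ord2_neq, ord2_neq') /=.
rewrite hz10.
rewrite ?conjC1 ?rmorphN /= ?conjCK ?mulrS ?mulr0n ?conjC1 /=.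
set ci := (_^-1).
cringH hzz.
Qed.

End Part2.

Lemma main_aux (k : nat) (z : 'I_k -> 'I_k -> C) (hk : (2 <= k)%N)
  (hz : forall i j : 'I_k, (i < j)%N -> `|z i j| = 1 /\ z j i = (z i j)^*) :
  positive_map (Phi z) /\ ~ decomposable (Phi z).
Proof.
have hz' : forall p q : 'I_k, p != q -> z p q * (z p q)^* = 1 /\ z q p = (z p q)^*.
  move=> p q pq; case: (ltngtP p q) => [lt|gt|eq].
  - have [n e] := hz p q lt; split => //.
    by rewrite -normCK n expr1n.
  - have [n e] := hz q p gt; split; last by rewrite e conjCK.
    by rewrite e conjCK mulrC -normCK n expr1n.
  - by move: pq; rewrite (val_inj eq) eqxx.
split.
  by move=> X hX; apply: Phi_pos.
move=> [L1 [L2 [[_ h1] [_ h2] hdec]]].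
have p01 : p0 hk != p1 hk by [].
have [hzz hz10] := hz' _ _ p01.
have A1 : 0 <= \sum_(x <- Fs hk z) x.1%:R * Qg (cL hk L1) x.2.
  by apply: sumr_ge0 => x _; apply: mulr_ge0; [exact: ler0n | exact: (CPquad hk h1)].
have A2 : 0 <= \sum_(x <- Gs hk z) x.1%:R * Qg (cL hk L2) x.2.
  by apply: sumr_ge0 => x _; apply: mulr_ge0; [exact: ler0n | exact: (CPquad hk h2)].
have := addr_ge0 A1 A2.
rewrite (combine hzz hdec) (value hzz hz10).
have k1 : (0 < k.-1)%N by rewrite -ltnS prednK // ltnW.
have ci : 0 < (2 * (k.-1)%:R : C)^-1 by rewrite invr_gt0 mulr_gt0 // ltr0n.
have pos : 0 < 8%:R * (2 * (k.-1)%:R : C)^-1 by rewrite mulr_gt0 // ltr0n.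
rewrite oppr_ge0 => h; by move: (lt_le_trans pos h); rewrite ltxx.
Qed.

End Work.

Theorem mainTheorem9 (C : numClosedFieldType) (k : nat) (z : 'I_k -> 'I_k -> C)
  (hk : (2 <= k)%N)
  (hz : forall i j : 'I_k, (i < j)%N -> `|z i j| = 1 /\ z j i = (z i j)^*) :
  positive_map (Phi z) /\ ~ decomposable (Phi z).
Proof. exact: main_aux. Qed.
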